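(* Let $S$ be a semigroup with finite $\mathcal{R}$-height, and let $A$ be a right ideal of $S$. Then $\mathrm{H}_{\mathcal{R}}(A)\leq 2\,\mathrm{H}_{\mathcal{R}}(S)-1$.
   Context: For a semigroup $S$, $S^1$ denotes $S$ with an identity adjoined if necessary. Green's preorder: $a\leq_{\mathcal{R}} b$ iff $aS^1\subseteq bS^1$; $\mathcal{R}$ is the associated equivalence; the $\mathcal{R}$-height $\mathrm{H}_{\mathcal{R}}$ of a semigroup is the supremum of the cardinalities of chains in its poset of $\mathcal{R}$-classes. A right ideal is a non-empty subset $A$ with $AS\subseteq A$; $\mathrm{H}_{\mathcal{R}}(A)$ is computed in $A$ itself. *)

(* Defs.v *)
(* Subsets are predicates P : T -> Prop; the whole semigroup
   is (fun _ => True).  Green's R-preorder is computed inside the subset P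
   (which is assumed to be a subsemigroup, e.g. S itself or a right ideal). *)
From Stdlib Require Import Arith.

Set Implicit Arguments.

Section Green.
Variable T : Type.
Variable op : T -> T -> T.

Definition associative_op : Prop :=
  forall x y z, op x (op y z) = op (op x y) z.

Definition leR (P : T -> Prop) (a b : T) : Prop :=
  a = b \/ exists c, P c /\ a = op b c.

Definition ltR (P : T -> Prop) (a b : T) : Prop :=
  leR P a b /\ ~ leR P b a.

(* f 0, ..., f (n-1) are elements of P whose R-classes (in P) form a
   strictly increasing chain of n distinct R-classes *)
Definition R_chain (P : T -> Prop) (f : nat -> T) (n : nat) : Prop :=
  (forall i, i < n -> P (f i)) /\
  (forall i j, i < j -> j < n -> ltR P (f i) (f j)).

Definition R_height_le (P : T -> Prop) (h : nat) : Prop :=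
  forall f n, R_chain P f n -> n <= h.

Definition is_R_height (P : T -> Prop) (h : nat) : Prop :=
  R_height_le P h /\ exists f, R_chain P f h.

Definition right_ideal (A : T -> Prop) : Prop :=
  (exists a, A a) /\ forall a s, A a -> A (op a s).

End Green.

(* Main.v *)
Require Import Defs.
From Stdlib Require Import Arith.
From Stdlib Require Import Lia Classical.

Section Aux.
Variable T : Type.
Variable op : T -> T -> T.
Hypothesis Hassoc : associative_op op.
Variable A : T -> Prop.
Hypothesis Hri : forall a s, A a -> A (op a s).

Let SS := fun _ : T => True.

Lemma leA_S a b : leR op A a b -> leR op SS a b.
Proof. intros [H|[c [_ H]]]; [left; auto | right; exists c; split; [exact I|auto]]. Qed.

Lemma leS_trans a b c : leR op SS a b -> leR op SS b c -> leR op SS a c.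
Proof.
  intros [H1|[x [_ H1]]] [H2|[y [_ H2]]]; subst.
  - left; auto.
  - right; exists y; split; [exact I|auto].
  - right; exists x; split; [exact I|auto].
  - right; exists (op y x); split; [exact I|]. symmetry; apply Hassoc.
Qed.

Lemma skip a b c : ltR op A a b -> ltR op A b c -> ltR op SS a c.
Proof.
  intros [Hab Hnba] [Hbc Hncb]. split.
  - eapply leS_trans; apply leA_S; eauto.
  - intro Hca. apply Hncb.
    destruct Hab as [Hab|[p [Hp Hab]]].
    + exfalso; apply Hnba; left; auto.
    + destruct Hca as [Hca|[r [_ Hca]]].
      * right; exists p; split; [auto| congruence].
      * right; exists (op p r); split; [auto|]. rewrite Hca, Hab. symmetry; apply Hassoc.
Qed.

Lemma chain_skip f n i k : R_chain op A f n -> i + 1 < k -> k < n -> ltR op SS (f i) (f k).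
Proof.
  intros [Hin Hlt] H1 H2. apply skip with (b := f (i+1)); apply Hlt; lia.
Qed.

Lemma bound hS : R_height_le op SS hS -> forall f n, R_chain op A f n -> n <= 2 * hS - 1.
Proof.
  intros Hle f n Hc. destruct (le_lt_dec n (2*hS-1)) as [h|h]; auto. exfalso.
  assert (HS1 : 1 <= hS).
  { apply (Hle (fun _ => f 0) 1). split; [intros; exact I| intros; lia]. }
  destruct Hc as [Hin Hlt] eqn:Hceq.
  destruct (classic (leR op SS (f 0) (op (f 0) (f 0)))) as [Hm|Hm].
  - set (g := fun k => match k with 0 => f 0 | S k' => f (2*k'+1) end).
    assert (R_chain op SS g (hS+1)).
    { split; [intros; exact I|]. intros i j Hij Hj.
      destruct i as [|i']; destruct j as [|j']; try lia; simpl.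
      + destruct j' as [|j''].
        * simpl. split. apply leA_S. apply Hlt; lia.
          intro H. destruct (Hlt 0 1 ltac:(lia) ltac:(lia)) as [H01 Hn10].
          apply Hn10. destruct H as [H|[r [_ H]]].
          { left; auto. }
          destruct Hm as [Hm|[y [_ Hm]]].
          { right; exists (op (f 0) r); split; [apply Hri, Hin; lia|]. simpl in H. rewrite H.
            rewrite (Hassoc (f 0) (f 0) r). rewrite <- Hm. reflexivity. }
          right; exists (op (op (f 0) y) r); split; [apply Hri, Hri, Hin; lia|]. simpl in H. rewrite H.
          rewrite (Hassoc (f 0) (op (f 0) y) r). rewrite (Hassoc (f 0) (f 0) y).
          rewrite <- Hm. reflexivity.
        * apply chain_skip with n; auto; lia.
      + apply chain_skip with n; auto; lia. }
    apply Hle in H. lia.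
  - set (g := fun k => match k with 0 => op (f 0) (f 0) | S k' => f (2*k') end).
    assert (R_chain op SS g (hS+1)).
    { split; [intros; exact I|]. intros i j Hij Hj.
      destruct i as [|i']; destruct j as [|j']; try lia; simpl.
      + destruct j' as [|j''].
        * simpl. split. right; exists (f 0); split; [exact I|auto]. exact Hm.
        * assert (Hl := chain_skip _ _ 0 (2 * S j'') Hc ltac:(lia) ltac:(lia)).
          destruct Hl as [Hl1 Hl2]. split.
          { eapply leS_trans; [|exact Hl1]. right; exists (f 0); split; [exact I|auto]. }
          intro H. apply Hl2. eapply leS_trans; [exact H|].
          right; exists (f 0); split; [exact I|auto].
      + apply chain_skip with n; auto; lia. }
    apply Hle in H. lia.
Qed.

End Aux.

Lemma max_exists (P : nat -> Prop) B : P 0 -> (forall n, P n -> n <= B) ->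
  exists m, P m /\ forall n, P n -> n <= m.
Proof.
  revert P. induction B; intros P H0 HB.
  - exists 0; split; auto.
  - destruct (classic (P (S B))) as [H|H].
    + exists (S B); split; auto.
    + apply IHB; auto. intros n Hn. assert (n <= S B) by auto.
      destruct (Nat.eq_dec n (S B)); subst; [contradiction|lia].
Qed.

Theorem corollary3p7 (T : Type) (op : T -> T -> T)
  (Hassoc : associative_op op) (A : T -> Prop) (hS : nat) :
  is_R_height op (fun _ => True) hS ->
  right_ideal op A ->
  exists hA, is_R_height op A hA /\ hA <= 2 * hS - 1.
Proof.
  intros [Hle _] [[a _] Hri].
  destruct (max_exists (fun n => exists f, R_chain op A f n) (2 * hS - 1)) as [m [[f Hf] Hm]].
  - exists (fun _ => a); split; intros; lia.
  - intros n [f Hf]. eapply bound; eauto.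
  - exists m. split.
    + split; [intros g n Hg; apply Hm; eauto | eauto].
    + eapply bound; eauto.
Qed.
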